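(* Let $E$ be an acyclic directed graph and let $G(E)$ be a dense subsemigroup of a topological semigroup $S$. Then $E(S)=\overline{E(G(E))}$ and the set $E(S)\setminus\{0\}$ is open in $S$.
   Context: All spaces are Hausdorff. $E(T)$ denotes the set of idempotents of a semigroup $T$; $0$ is the zero of $G(E)$. A directed graph $E=(E^0,E^1,r,s)$ has vertices $E^0$, edges $E^1$, source/range maps $s,r:E^1\to E^0$; paths are vertices and sequences of edges $e_1\ldots e_n$ with $r(e_i)=s(e_{i+1})$; acyclic means no path of non-zero length with equal source and range. The graph inverse semigroup $G(E)$ is the semigroup with zero $0$ generated by $E^0$, $E^1$, $E^{-1}=\{e^{-1}\mid e\in E^1\}$ subject to: for $a,b\in E^0$, $e,f\in E^1$: $ab=a$ if $a=b$, else $0$; $s(e)e=er(e)=e$; $e^{-1}s(e)=r(e)e^{-1}=e^{-1}$; $e^{-1}f=r(e)$ if $e=f$, else $0$. *)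

(* Defs.v *)
From HB Require Import structures.
From mathcomp Require Import all_boot.
From mathcomp Require Import boolp classical_sets topology.
Set Implicit Arguments. Unset Strict Implicit. Unset Printing Implicit Defensive.

Record digraph := Digraph {
  vert : Type;
  edge : Type;
  src : edge -> vert;
  rng : edge -> vert }.

Section GraphInverseSemigroup.
Variable E : digraph.

(* A (raw) path is a pair (v, [e1; ...; en]): for n = 0 it is the vertex v,
   otherwise it is the edge sequence e1...en, with v = s(e1). *)
Definition rawpath := (vert E * seq (edge E))%type.

Fixpoint starts_at (v : vert E) (l : seq (edge E)) : Prop :=
  if l is e :: l' then src e = v /\ starts_at (rng e) l' else True.

Fixpoint endv (v : vert E) (l : seq (edge E)) : vert E :=
  if l is e :: l' then endv (rng e) l' else v.

Definition is_path (p : rawpath) : Prop := starts_at p.1 p.2.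
Definition psource (p : rawpath) : vert E := p.1.
Definition prange (p : rawpath) : vert E := endv p.1 p.2.

Definition acyclic : Prop :=
  forall p : rawpath, is_path p -> p.2 <> [::] -> prange p <> psource p.

Lemma starts_at_cat v l1 l2 :
  starts_at v (l1 ++ l2) <-> starts_at v l1 /\ starts_at (endv v l1) l2.
Proof.
elim: l1 v => [|e l1 IH] v /=; first by tauto.
rewrite IH; tauto.
Qed.

Lemma endv_cat v l1 l2 : endv v (l1 ++ l2) = endv (endv v l1) l2.
Proof. by elim: l1 v => [|e l1 IH] v //=. Qed.

(* Elements of G(E): 0, and p q^{-1} for paths p, q with r(p) = r(q)
   (the standard normal form of elements of the graph inverse semigroup). *)
Inductive gie_raw := GZero | GElt of rawpath & rawpath.

Definition gie_wf (x : gie_raw) : Prop :=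
  match x with
  | GZero => True
  | GElt p q => is_path p /\ is_path q /\ prange p = prange q
  end.

(* (p q^{-1}) (t u^{-1}) = (p w) u^{-1}   if t = q w,
                        = p (u w)^{-1}   if q = t w,
                        = 0              otherwise. *)
Definition gmul_raw (x y : gie_raw) : gie_raw :=
  match x, y with
  | GElt p q, GElt t u =>
    if pselect (t.1 = q.1 /\ take (size q.2) t.2 = q.2) then
      GElt (p.1, p.2 ++ drop (size q.2) t.2) u
    else if pselect (q.1 = t.1 /\ take (size t.2) q.2 = t.2) then
      GElt p (u.1, u.2 ++ drop (size t.2) q.2)
    else GZero
  | _, _ => GZero
  end.

Lemma gmul_wf x y : gie_wf x -> gie_wf y -> gie_wf (gmul_raw x y).
Proof.
case: x => [|p q] //; case: y => [|t u] //.
case: p => vp lp; case: q => vq lq; case: t => vt lt; case: u => vu lu /=.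
rewrite /is_path /prange /=.
move=> [Hp [Hq Hpq]] [Ht [Hu Htu]].
destruct (pselect _) as [[Hv Htk]|Hn]; simpl.
  have Hlt : lt = lq ++ drop (size lq) lt by rewrite -{1}(cat_take_drop (size lq) lt) Htk.
  move: Ht Htu; rewrite {1 2}Hlt Hv /is_path /prange /=.
  move=> /starts_at_cat [_ Hw]; rewrite endv_cat => Htu.
  split; [apply/starts_at_cat; rewrite Hpq; split=> // | split=> //].
  by rewrite endv_cat Hpq.
destruct (pselect _) as [[Hv Htk]|Hn']; simpl => //.
have Hlq : lq = lt ++ drop (size lt) lq by rewrite -{1}(cat_take_drop (size lt) lq) Htk.
move: Hq Hpq; rewrite {1 2}Hlq Hv /is_path /prange /=.
move=> /starts_at_cat [_ Hw]; rewrite endv_cat => Hpq.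
split=> //; split.
  by apply/starts_at_cat; split=> //; rewrite -Htu.
by rewrite endv_cat -Htu.
Qed.

Definition gie : Type := {x : gie_raw | gie_wf x}.

Definition gmul (x y : gie) : gie :=
  exist _ (gmul_raw (sval x) (sval y)) (gmul_wf (svalP x) (svalP y)).

Definition gzero : gie := exist _ GZero I.

End GraphInverseSemigroup.

(* Main.v *)
Require Import Defs.
From HB Require Import structures.
From mathcomp Require Import all_boot.
From mathcomp Require Import boolp classical_sets topology.
Local Open Scope classical_set_scope.

Lemma gie_eq (E : digraph) (x y : gie E) : sval x = sval y -> x = y.
Proof.
case: x => x wx; case: y => y wy /= exy; subst y.
by rewrite (Prop_irrelevance wx wy).
Qed.

Lemma acyc_noext (E : digraph) (hE : acyclic E) (p q : rawpath E) w :
  is_path p -> prange p = prange q -> p.1 = q.1 -> p.2 = q.2 ++ w -> w = [::].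
Proof.
move=> Hp Hr H1 H2.
case: w H2 => [//|e w] H2; exfalso.
have Hs : starts_at (endv p.1 q.2) (e :: w).
  by move: Hp; rewrite /is_path H2 => /starts_at_cat [].
have := hE (endv p.1 q.2, e :: w) Hs (fun h => ltac:(discriminate h)).
apply; rewrite /prange /psource /=.
by move: Hr; rewrite /prange H2 endv_cat -H1.
Qed.

Lemma gie_sq (E : digraph) (hE : acyclic E) (g : gie E) :
  gmul g g <> gzero E -> gmul g g = g.
Proof.
case: g => [[|p q] wg] //=.
  by move=> H; exfalso; apply: H; apply: gie_eq.
move=> H; apply: gie_eq => /=.
have {}H : gmul_raw (GElt p q) (GElt p q) <> GZero E.
  by move=> H0; apply: H; apply: gie_eq.
move: wg H => [Hp [Hq Hr]]; rewrite /gmul_raw.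
case: pselect => [[H1 H2] _|Hn].
  have Hw : p.2 = q.2 ++ drop (size q.2) p.2 by rewrite -{1}(cat_take_drop (size q.2) p.2) H2.
  have -> := @acyc_noext _ hE _ _ _ Hp Hr H1 Hw.
  by rewrite cats0 -surjective_pairing.
case: pselect => [[H1 H2] _|Hn'].
  have Hw : q.2 = p.2 ++ drop (size p.2) q.2 by rewrite -{1}(cat_take_drop (size p.2) q.2) H2.
  have -> := @acyc_noext _ hE _ _ _ Hq (esym Hr) H1 Hw.
  by rewrite cats0 -surjective_pairing.
by [].
Qed.

Theorem lemma4p3 (E : digraph) (hE : acyclic E)
  (S : topologicalType) (mul : S -> S -> S)
  (hS : hausdorff_space S)
  (mulA : associative mul)
  (mul_cont : continuous (fun xy : S * S => mul xy.1 xy.2))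
  (f : gie E -> S) (f_inj : injective f)
  (f_mul : forall x y : gie E, f (gmul x y) = mul (f x) (f y))
  (f_dense : closure (range f) = setT) :
  [set x : S | mul x x = x] = closure (f @` [set x : gie E | gmul x x = x]) /\
  open ([set x : S | mul x x = x] `\ f (gzero E)).
Proof.
set sq := fun x => mul x x.
have sq_cont : continuous sq.
  move=> x; apply: (continuous_comp (f := fun x : S => (x, x))
     (g := fun xy : S * S => mul xy.1 xy.2)); last exact: mul_cont.
  by apply: cvg_pair; apply: cvg_id.
set z := f (gzero E).
have zz : sq z = z.
  rewrite /sq /z -f_mul; congr f; apply: gie_eq => //.
have cl0 : closed [set z] by apply: accessible_closed_set1; apply: hausdorff_accessible.
have clE : closure [set x | sq x = x] `<=` [set x | sq x = x].
  move=> s Hs; apply: hS => A B HA HB.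
  have HA' : nbhs s (sq @^-1` A) by exact: sq_cont HA.
  have [x [Ex [Ax Bx]]] := Hs _ (filterI HA' HB).
  by exists x; split => //; rewrite -Ex.
set U := sq @^-1` (~` [set z]).
have Uop : open U.
  apply: open_comp; first by move=> x _; apply: sq_cont.
  by rewrite openC.
have keyf : forall g, U (f g) -> sq (f g) = f g.
  move=> g Ug; rewrite /sq -f_mul; congr f; apply: gie_sq => // H.
  by apply: Ug; rewrite /sq -f_mul H.
have Usub : U `<=` [set x | sq x = x].
  move=> s Us; apply: clE => B HB.
  have HU : nbhs s U by apply: open_nbhs_nbhs.
  have : closure (range f) s by rewrite f_dense.
  move=> /(_ _ (filterI HU HB)) [_ [[g _ <-] [Ug Bg]]].
  by exists (f g); split => //; apply: keyf.
split.
  apply/seteqP; split; last first.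
    apply: subset_trans clE; apply: closureS => _ [g Hg <-].
    by rewrite /= /sq -f_mul Hg.
  move=> e He.
  have [->|nz] := pselect (e = z).
    by apply: subset_closure; exists (gzero E) => //; apply: gie_eq.
  move=> B HB.
  have Ue : U e.
    move=> H; apply: nz; rewrite -H; symmetry; exact: He.
  have HU : nbhs e U by apply: open_nbhs_nbhs.
  have : closure (range f) e by rewrite f_dense.
  move=> /(_ _ (filterI HU HB)) [_ [[g _ <-] [Ug Bg]]].
  exists (f g); split => //; exists g => //.
  apply: f_inj; rewrite f_mul; exact: keyf.
have -> : [set x | mul x x = x] `\ z = U.
  apply/seteqP; split.
    by move=> x [Hx Hz]; rewrite /U /= /sq Hx.
  move=> x Ux; split; first exact: Usub.
  by move=> /= xz; apply: Ux; rewrite /= xz.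
exact: Uop.
Qed.
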